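(* Let $\mathcal A\subset\mathbb R^n$ be compact with diameter $D_{\mathcal A}<\infty$ and symmetric ($\mathcal A=-\mathcal A$), let $\mathcal X=\mathrm{lin}(\mathcal A)$, let $f$ have $L$-Lipschitz gradient, and let $\eta>1$. Run the AC-FW algorithm with the Matching Pursuit subroutine and a damping sequence satisfying Condition (D), with $L_0>0$. Then the subroutine satisfies parts (i) and (ii) of Condition (S), and for every $t\ge0$, $$|\mathcal G\cap\mathcal I_\eta\cap[t]|\ge t+1-\left\lfloor\log_\eta\!\left(\frac{L}{rL_0}\right)\right\rfloor.$$ If additionally $f$ is convex and $R_{\mathcal A}<\infty$, then part (iii) of Condition (S) holds with $R=R_{\mathcal A}$.
   Context: $D_{\mathcal A}:=\sup_{x,y\in\mathcal A}\|x-y\|_2$; $f:\mathbb R^n\to\mathbb R$ is differentiable with $\|\nabla f(x)-\nabla f(y)\|_2\le L\|x-y\|_2$. $x^\star$ is an optimal solution of $\min_{x\in\mathcal X}f(x)$. Atomic norm: $\|x\|_{\mathcal A}:=\inf\{c>0:x\in c\cdot\mathrm{conv}(\mathcal A)\}$. $R_{\mathcal A}:=\max\{1,\sup\{\|x-x^\star\|_{\mathcal A}:x\in\mathrm{lin}(\mathcal A),\ f(x)\le f(x_0)\}\}$. For $x\ne y$, $\ell(x,y):=2|f(y)-f(x)-\nabla f(x)^\top(y-x)|/\|y-x\|_2^2$, $\ell(x,x):=0$. AC-FW algorithm: given $\{r_t\}_{t\ge0}$ and a subroutine, pick $x_{-1}\in\mathcal A$, $x_0\in\arg\min_{v\in\mathcal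 A}\nabla f(x_{-1})^\top v$, $L_0:=\ell(x_{-1},x_0)$. For $t=0,1,\dots$: $v_t\in\arg\min_{v\in\mathcal A}\nabla f(x_t)^\top v$; the subroutine returns $(d_t,\gamma_t^{\max})$; $\gamma_t:=\min\{\nabla f(x_t)^\top d_t/(L_t\|d_t\|_2^2),\gamma_t^{\max}\}$; $\bar x_{t+1}:=x_t-\gamma_td_t$; $L_{t+1}:=\max\{\ell(x_t,\bar x_{t+1}),r_tL_t\}$; $x_{t+1}:=\bar x_{t+1}$ if $f(\bar x_{t+1})<f(x_t)$, else $x_{t+1}:=x_t$. Matching Pursuit subroutine: $d_t:=-v_t$, $\gamma_t^{\max}:=\infty$. $[t]:=\{0,\dots,t\}$; $\mathcal I_\eta:=\{t\ge0:L_{t+1}\le\eta L_t\}$; $\mathcal G:=\{t\ge0:\gamma_t^{\max}\ge1\text{ or }\gamma_t<\gamma_t^{\max}\}$. Condition (D): $r_t\in(0,1]$ for all $t$ and $r:=\prod_{t\ge0}r_t\in(0,1]$. Condition (S): for all $t\ge0$: (i) $\|d_t\|_2\le D_{\mathcal A}$ and $x_t-\gamma d_t\in\mathcal X$ for all finite $\gamma\in[0,\gamma_t^{\max}]$; (ii) $\mathcal G$ is infinite; (iii) if $f$ is convex, there is $R\ge1$ independent of $t$ with $\nabla f(x_t)^\top d_t\ge(f(x_t)-f(x^\star))/R$. *)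

(* Defs.v *)
From HB Require Import structures.
From mathcomp Require Import all_boot all_order all_algebra.
From mathcomp Require Import all_classical all_reals all_analysis.
Set Implicit Arguments. Unset Strict Implicit. Unset Printing Implicit Defensive.
Import Order.TTheory GRing.Theory Num.Theory.
Import numFieldNormedType.Exports.
Local Open Scope classical_set_scope.
Local Open Scope ring_scope.

Section Defs.
Variables (R : realType) (n : nat).
Notation V := 'rV[R]_n.

Definition dot (u w : V) : R := \sum_(i < n) u 0 i * w 0 i.
Definition norm2 (u : V) : R := Num.sqrt (dot u u).

Definition diam (A : set V) : R :=
  sup (fun z : R => exists x y, A x /\ A y /\ z = norm2 (x - y)).

Definition lin (A : set V) : set V :=
  fun x => exists (k : nat) (c : 'I_k -> R) (a : 'I_k -> V),
    (forall i, A (a i)) /\ x = \sum_(i < k) c i *: a i.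

Definition conv (A : set V) : set V :=
  fun x => exists (k : nat) (w : 'I_k -> R) (a : 'I_k -> V),
    (forall i, 0 <= w i) /\ \sum_(i < k) w i = 1 /\
    (forall i, A (a i)) /\ x = \sum_(i < k) w i *: a i.

Definition atomic_norm (A : set V) (x : V) : \bar R :=
  ereal_inf (fun e : \bar R => exists c : R,
    0 < c /\ (exists y, conv A y /\ x = c *: y) /\ e = c%:E).

Definition R_atom (A : set V) (f : V -> R) (xstar x0 : V) : \bar R :=
  maxe 1%E (ereal_sup (fun e : \bar R => exists y,
    lin A y /\ f y <= f x0 /\ e = atomic_norm A (y - xstar))).

Definition ell (f : V -> R) (grad : V -> V) (x y : V) : R :=
  if x == y then 0
  else 2 * `|f y - f x - dot (grad x) (y - x)| / (norm2 (y - x)) ^+ 2.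

Definition lmo (A : set V) (g v : V) : Prop :=
  A v /\ forall u, A u -> dot g v <= dot g u.

Definition convex_fun (f : V -> R) : Prop :=
  forall x y (lam : R), 0 <= lam <= 1 ->
    f (lam *: x + (1 - lam) *: y) <= lam * f x + (1 - lam) * f y.

Definition is_gradient (f : V -> R) (grad : V -> V) : Prop :=
  forall x, differentiable f x /\ forall h, 'd f x h = dot (grad x) h.

Definition lipschitz_grad (grad : V -> V) (L : R) : Prop :=
  forall x y, norm2 (grad x - grad y) <= L * norm2 (x - y).

(* A run of AC-FW with damping sequence rs, given the subroutine outputs
   d t and gmax t (gmax t in [0, +oo], an extended real).
   Here x t = x_t, xm1 = x_{-1}, v t = v_t, gam t = gamma_t,
   xbar t.+1 = bar x_{t+1}, L t = L_t. *)
Definition ACFW_run (A : set V) (f : V -> R) (grad : V -> V) (rs : nat -> R)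
  (xm1 : V) (x v d xbar : nat -> V) (gmax : nat -> \bar R) (gam L : nat -> R) : Prop :=
  A xm1 /\ lmo A (grad xm1) (x 0%N) /\ L 0%N = ell f grad xm1 (x 0%N) /\
  forall t : nat,
    lmo A (grad (x t)) (v t) /\
    (gam t)%:E = mine ((dot (grad (x t)) (d t) / (L t * norm2 (d t) ^+ 2))%:E) (gmax t) /\
    xbar t.+1 = x t - gam t *: d t /\
    L t.+1 = Num.max (ell f grad (x t) (xbar t.+1)) (rs t * L t) /\
    x t.+1 = (if f (xbar t.+1) < f (x t) then xbar t.+1 else x t).

Definition MP_sub (v d : nat -> V) (gmax : nat -> \bar R) : Prop :=
  forall t, d t = - v t /\ gmax t = +oo%E.

Definition inG (gmax : nat -> \bar R) (gam : nat -> R) (t : nat) : bool :=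
  ((1%:E <= gmax t)%E || ((gam t)%:E < gmax t)%E).

Definition inI (eta : R) (L : nat -> R) (t : nat) : bool := L t.+1 <= eta * L t.

Definition count_GI (gmax : nat -> \bar R) (gam : nat -> R) (eta : R) (L : nat -> R)
  (t : nat) : nat :=
  count (fun i => inG gmax gam i && inI eta L i) (iota 0 t.+1).

Definition condD (rs : nat -> R) (r : R) : Prop :=
  (forall t, 0 < rs t <= 1) /\
  ((fun T : nat => \prod_(i < T) rs i) @ \oo --> r) /\ 0 < r <= 1.

End Defs.

(* Main.v *)
Require Import Defs.
From HB Require Import structures.
From mathcomp Require Import all_boot all_order all_algebra.
From mathcomp Require Import all_classical all_reals all_analysis.
From mathcomp Require Import ring lra.
Import Order.TTheory GRing.Theory Num.Theory.
Import numFieldNormedType.Exports.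
Local Open Scope ring_scope.
Section Dot.
Variables (R : realType) (n : nat).
Local Notation V := 'rV[R]_n.
Implicit Types u w y : V.

Lemma dotC u w : dot u w = dot w u.
Proof. by apply: eq_bigr => i _; rewrite mulrC. Qed.
Lemma dotDr u w y : dot u (w + y) = dot u w + dot u y.
Proof. by rewrite /dot -big_split; apply: eq_bigr => i _; rewrite !mxE mulrDr. Qed.
Lemma dotDl u w y : dot (w + y) u = dot w u + dot y u.
Proof. by rewrite dotC dotDr !(dotC u). Qed.
Lemma dotZr c u w : dot u (c *: w) = c * dot u w.
Proof. by rewrite /dot mulr_sumr; apply: eq_bigr => i _; rewrite !mxE mulrCA. Qed.
Lemma dotZl c u w : dot (c *: u) w = c * dot u w.
Proof. by rewrite dotC dotZr dotC. Qed.
Lemma dotNr u w : dot u (- w) = - dot u w.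
Proof. by rewrite -scaleN1r dotZr mulN1r. Qed.
Lemma dotNl u w : dot (- u) w = - dot u w.
Proof. by rewrite dotC dotNr dotC. Qed.
Lemma dotBr u w y : dot u (w - y) = dot u w - dot u y.
Proof. by rewrite dotDr dotNr. Qed.
Lemma dotBl u w y : dot (w - y) u = dot w u - dot y u.
Proof. by rewrite dotDl dotNl. Qed.
Lemma dot0r u : dot u 0 = 0.
Proof. by rewrite /dot big1 // => i _; rewrite mxE mulr0. Qed.
Lemma dot_ge0 u : 0 <= dot u u.
Proof. by apply: sumr_ge0 => i _; rewrite -expr2 sqr_ge0. Qed.
Lemma dot_eq0 u : dot u u = 0 -> u = 0.
Proof.
move=> /eqP; rewrite psumr_eq0; last by move=> i _; rewrite -expr2 sqr_ge0.
move=> /allP H; apply/rowP => i; rewrite mxE.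
have /H : i \in index_enum 'I_n by rewrite mem_index_enum.
by rewrite /= mulf_eq0 orbb => /eqP.
Qed.
Lemma dot_sumr k (c : 'I_k -> R) (a : 'I_k -> V) u :
  dot u (\sum_(i < k) c i *: a i) = \sum_(i < k) c i * dot u (a i).
Proof.
elim: k c a => [|k IH] c a; first by rewrite !big_ord0 dot0r.
by rewrite !big_ord_recr /= dotDr IH dotZr.
Qed.

Lemma norm2_ge0 u : 0 <= norm2 u. Proof. exact: sqrtr_ge0. Qed.
Lemma norm2_sq u : norm2 u ^+ 2 = dot u u.
Proof. by rewrite sqr_sqrtr // dot_ge0. Qed.
Lemma norm2Z c u : norm2 (c *: u) = `|c| * norm2 u.
Proof. by rewrite /norm2 dotZl dotZr mulrA sqrtrM ?sqr_ge0 // -expr2 sqrtr_sqr. Qed.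
Lemma norm2N u : norm2 (- u) = norm2 u.
Proof. by rewrite /norm2 dotNl dotNr opprK. Qed.
Lemma norm2_gt0 u : u != 0 -> 0 < norm2 u.
Proof.
move=> nz; rewrite lt_neqAle norm2_ge0 andbT eq_sym; apply/negP => /eqP h.
have : dot u u = 0 by rewrite -norm2_sq h expr0n.
by move/dot_eq0 => e; rewrite e eqxx in nz.
Qed.

Lemma CS u w : dot u w <= norm2 u * norm2 w.
Proof.
have [->|nz] := eqVneq u 0.
  by rewrite /dot big1 ?mulr_ge0 ?norm2_ge0 // => i _; rewrite mxE mul0r.
set a := dot u u; set b := dot w w; set D := dot u w.
have ha : 0 < a by rewrite /a -norm2_sq exprn_gt0 // norm2_gt0.
have key : forall s, 0 <= a * s ^+ 2 - 2 * D * s + b.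
  move=> s; have := dot_ge0 (s *: u - w).
  rewrite dotBl !dotBr !dotZl !dotZr (dotC w u) -/a -/b -/D.
  by move=> h; apply: le_trans h _; rewrite le_eqVlt; apply/orP; left; apply/eqP; ring.
have := key (D / a).
have e : a * (D / a) ^+ 2 - 2 * D * (D / a) + b = b - D ^+ 2 / a.
  by field; rewrite gt_eqF.
rewrite e subr_ge0 ler_pdivrMr // => hD.
rewrite -sqrtrM ?dot_ge0 //; apply: le_trans (ler_norm D) _.
rewrite -sqrtr_sqr; apply: ler_wsqrtr; by rewrite mulrC.
Qed.
End Dot.

Section Lin.
Variables (R : realType) (n : nat).
Local Notation V := 'rV[R]_n.
Variable A : set V.
Lemma lin0 : lin A 0.
Proof. by exists 0%N, (fun=> 0), (fun=> 0); split=> [[]//|]; rewrite big_ord0. Qed.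
Lemma lin_add_atom y a c : lin A y -> A a -> lin A (y + c *: a).
Proof.
move=> [k [c1 [a1 [Ha ->]]]] Aa.
exists k.+1, (fun i => if unlift ord0 i is Some j then c1 j else c),
  (fun i => if unlift ord0 i is Some j then a1 j else a); split.
  by move=> i; case: (unlift ord0 i).
by rewrite big_ord_recl unlift_none addrC; congr (_ + _); apply: eq_bigr => i _; rewrite liftK.
Qed.
Lemma lin_atom a : A a -> lin A a.
Proof. by move=> Aa; rewrite -(add0r a) -(scale1r a); apply: lin_add_atom => //; exact: lin0. Qed.
End Lin.

Section Diam.
Variables (R : realType) (n : nat).
Local Notation V := 'rV[R]_n.

Lemma coord_le (u : V) i : `|u 0 i| <= `|u|.
Proof.
have -> : `|u| = mx_norm u by [].
rewrite mx_normrE. exact: (le_bigmax 0 (fun ij : 'I_1 * 'I_n => `|u ij.1 ij.2|) (0, i)).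
Qed.

Lemma dot_le_norm (u : V) : dot u u <= n%:R * `|u| ^+ 2.
Proof.
rewrite /dot; apply: le_trans (_ : \sum_(i < n) `|u|^+2 <= _).
  apply: ler_sum => i _; rewrite -expr2 -real_normK ?num_real //.
  by rewrite lerXn2r ?nnegrE ?normr_ge0 // coord_le.
by rewrite sumr_const card_ord mulr_natl.
Qed.

Lemma diam_bound (A : set V) : compact A -> (forall y, A y <-> A (- y)) ->
  forall a, A a -> norm2 a <= diam A.
Proof.
move=> cA sA a Aa.
have [M [_ HM]] := compact_bounded cA.
have HM' : forall x, A x -> `|x| <= M + 1.
  by move=> x Ax; apply: (HM (M + 1)) => //; rewrite ltrDl.
have ub : has_ubound (fun z : R => exists x y, A x /\ A y /\ z = norm2 (x - y)).
  exists (Num.sqrt (n%:R * (2 * (M + 1)) ^+ 2)) => z [x [y [Ax [Ay ->]]]].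
  apply: ler_wsqrtr; apply: le_trans (dot_le_norm _) _.
  apply: ler_wpM2l => //; rewrite lerXn2r ?nnegrE ?normr_ge0 //.
    by rewrite mulr_ge0 // (le_trans (normr_ge0 x) (HM' x Ax)).
  apply: le_trans (ler_normB _ _) _; rewrite mulrDl mul1r.
  by rewrite lerD ?HM'.
have : norm2 (a - - a) <= diam A.
  by apply: ub_le_sup => //; exists a, (- a); split => //; split => //; rewrite -sA.
rewrite opprK -mulr2n -(scaler_nat 2) norm2Z => h; apply: le_trans h.
by rewrite ger0_norm // ler_peMl ?norm2_ge0 // ler1n.
Qed.
End Diam.

Section Desc.
Variables (R : realType) (n : nat).
Local Notation V := 'rV[R]_n.
Variables (f : V -> R) (grad : V -> V).
Hypothesis Hg : is_gradient f grad.

Lemma line_deriv (x u : V) (s : R) :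
  is_derive s (1:R) (fun t : R => f (x + t *: u)) (dot (grad (x + s *: u)) u).
Proof.
have [df dd] := Hg (x + s *: u).
have E : (fun h : R => h^-1 *: (((fun t : R => f (x + t *: u)) \o shift s) (h *: (1:R)) - f (x + s *: u)))
  = (fun h : R => h^-1 *: ((f \o shift (x + s *: u)) (h *: u) - f (x + s *: u))).
  apply/funext => h /=; congr (_ *: (f _ - _)).
  by rewrite -[h%:A]/(h * 1) mulr1 scalerDl addrCA addrA.
apply: DeriveDef; first by rewrite /derivable E; exact: diff_derivable.
by rewrite /derive E -/(derive f (x + s *: u) u) deriveE.
Qed.

Variable Lf : R.
Hypothesis HL : lipschitz_grad grad Lf.

Lemma descent_sg (sg : R) x y : `|sg| = 1 ->
  sg * (f y - f x - dot (grad x) (y - x)) <= Lf / 2 * norm2 (y - x) ^+ 2.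
Proof.
move=> hsg.
set u := y - x; set D0 := dot (grad x) u; set N := norm2 u ^+ 2.
set G := fun t : R => f (x + t *: u).
pose h := sg \*: (G - D0 \*: id) - (Lf / 2 * N) \*: (id ^+ 2).
have hE : forall t, h t = sg * (G t - D0 * t) - Lf / 2 * N * t ^+ 2.
  by move=> t; rewrite /h /= !fctE.
have dh : forall c, is_derive c (1:R) h (sg * (dot (grad (x + c *: u)) u - D0) - Lf / 2 * N * (2 * c)).
  move=> c; have HG := line_deriv x u c.
  apply: is_derive_eq.
  by rewrite /GRing.scale /= !mulr1 expr1.
have cont : {within `[0, 1], continuous h}%classic.
  by apply: derivable_within_continuous => t _; have [] := dh t.
have [c cin eq] := MVT ltr01 (fun c _ => dh c) cont.
move: cin; rewrite in_itv /= => /andP[c0 c1].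
move: eq; rewrite !hE /G scale0r addr0 scale1r.
have -> : x + u = y by rewrite /u addrC subrK.
rewrite mulr1 mulr0 subr0 expr1n expr0n /= mulr0 subr0 mulr1.
have key : sg * (dot (grad (x + c *: u)) u - D0) <= Lf * c * norm2 u ^+ 2.
  set w := grad (x + c *: u) - grad x.
  have e1 : dot (grad (x + c *: u)) u - D0 = dot w u by rewrite /w dotBl.
  rewrite e1.
  have hw : norm2 w <= Lf * c * norm2 u.
    apply: le_trans (HL _ _) _; rewrite addrC addKr norm2Z gtr0_norm //.
    by rewrite mulrA.
  have a1 : `|dot w u| <= norm2 w * norm2 u.
    rewrite ler_norml; apply/andP; split; last exact: CS.
    by rewrite lerNl -dotNl; have := @CS _ _ (- w) u; rewrite norm2N.
  have s1 : sg * dot w u <= `|dot w u|.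
    by apply: le_trans (ler_norm _) _; rewrite normrM hsg mul1r.
  apply: le_trans s1 _.
  apply: le_trans a1 _; rewrite expr2 mulrA ler_wpM2r ?norm2_ge0 //.
move=> eq; rewrite -/N in key.
rewrite !mulrBr in eq key *.
lra.
Qed.

Lemma ell_le x y : x != y -> ell f grad x y <= Lf.
Proof.
move=> nxy; rewrite /ell (negPf nxy).
have hN : 0 < norm2 (y - x) ^+ 2.
  by rewrite exprn_gt0 // norm2_gt0 // subr_eq0 eq_sym.
rewrite ler_pdivrMr //.
have : `|f y - f x - dot (grad x) (y - x)| <= Lf / 2 * norm2 (y - x) ^+ 2.
  rewrite ler_norml; apply/andP; split.
    by rewrite lerNl -mulN1r; apply: descent_sg; rewrite normrN normr1.
  by rewrite -[X in X <= _]mul1r; apply: descent_sg; rewrite normr1.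
move=> h; have := ler_wpM2l (ler0n _ 2) h.
by rewrite mulrA [2 * (Lf / 2)]mulrC divfK ?pnatr_eq0.
Qed.

Lemma conv_grad : convex_fun f -> forall x y, f x + dot (grad x) (y - x) <= f y.
Proof.
move=> cf x y; set u := y - x.
have HG := line_deriv x u 0.
rewrite scale0r addr0 in HG.
have [der dv] := HG.
set q := (fun h : R => h^-1 *: (((fun t : R => f (x + t *: u)) \o shift 0) (h *: (1:R)) - f (x + 0 *: u))).
have cv : (q @ 0^' --> dot (grad x) u)%classic.
  by rewrite -dv; exact: der.
have sub : (((0:R)^'+) `=>` (0:R)^')%classic.
  move=> P; rewrite /dnbhs /within /=; apply: filterS => z H z0.
  by apply: H; rewrite gt_eqF.
have cv' : (q @ 0^'+ --> dot (grad x) u)%classic.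
  exact: cvg_trans (cvg_fmap2 sub) cv.
rewrite -lerBrDl.
apply: (cvgr_to_le cv'); near=> h.
have h0 : 0 < h by near: h; exact: nbhs_right_gt.
have h1 : h <= 1 by near: h; apply: nbhs_right_le; exact: ltr01.
rewrite /q /= scale0r addr0 -[h%:A]/(h * 1) mulr1 addr0.
have := cf y x h; rewrite (ltW h0) h1 /= => /(_ isT).
have -> : h *: y + (1 - h) *: x = x + h *: u.
  by rewrite /u scalerBr scalerBl scale1r; rewrite addrCA addrA.
move=> cvx; rewrite /GRing.scale /= ler_pdivrMl //.
lra.
Unshelve. all: by end_near.
Qed.
End Desc.


Theorem lemma6 (R : realType) (n : nat) (A : set 'rV[R]_n)
  (f : 'rV[R]_n -> R) (grad : 'rV[R]_n -> 'rV[R]_n) (Lf eta : R)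
  (rs : nat -> R) (r : R)
  (xm1 : 'rV[R]_n) (x v d xbar : nat -> 'rV[R]_n)
  (gmax : nat -> \bar R) (gam L : nat -> R) :
  compact A ->
  (forall y, A y <-> A (- y)) ->
  is_gradient f grad ->
  lipschitz_grad grad Lf ->
  1 < eta ->
  condD rs r ->
  ACFW_run A f grad rs xm1 x v d xbar gmax gam L ->
  MP_sub v d gmax ->
  0 < L 0%N ->
  (* Condition (S)(i) *)
  (forall t : nat, norm2 (d t) <= diam A /\
     (forall g : R, 0 <= g -> (g%:E <= gmax t)%E -> lin A (x t - g *: d t))) /\
  (* Condition (S)(ii) *)
  infinite_set (fun t : nat => inG gmax gam t) /\
  (* counting bound *)
  (forall t : nat,
     (t.+1)%:R - (Num.floor (ln (Lf / (r * L 0%N)) / ln eta))%:~R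
       <= ((count_GI gmax gam eta L t)%:R : R)) /\
  (* Condition (S)(iii) with R = R_A, in the convex case *)
  (forall xstar : 'rV[R]_n,
     lin A xstar -> (forall y, lin A y -> f xstar <= f y) ->
     convex_fun f ->
     (R_atom A f xstar (x 0%N) < +oo)%E ->
     1 <= fine (R_atom A f xstar (x 0%N)) /\
     forall t : nat,
       (f (x t) - f xstar) / fine (R_atom A f xstar (x 0%N)) <= dot (grad (x t)) (d t)).
Proof.
move=> cA sA Hg HL eta1 [rpos [rcv /andP[r0 r1]]] [Axm1 [lmo0 [L0def run]]] mp L0pos.
have hd t : d t = - v t by have [] := mp t.
have hgm t : gmax t = +oo%E by have [] := mp t.
have vA t : A (v t) by have [[]] := run t.
have xbarE t : xbar t.+1 = x t + gam t *: v t.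
  by have [_ [_ [-> _]]] := run t; rewrite hd scalerN opprK.
have xS t : x t.+1 = (if f (xbar t.+1) < f (x t) then xbar t.+1 else x t).
  by have [_ [_ [_ [_ ->]]]] := run t.
have LS t : L t.+1 = Num.max (ell f grad (x t) (xbar t.+1)) (rs t * L t).
  by have [_ [_ [_ [-> _]]]] := run t.
have xlin t : lin A (x t).
  elim: t => [|t IH]; first by apply: lin_atom; case: lmo0.
  by rewrite xS; case: ifP => _ //; rewrite xbarE; apply: lin_add_atom.
have fdec t : f (x t) <= f (x 0%N).
  elim: t => [//|t IH]; rewrite xS; case: ifP => // h.
  exact: le_trans (ltW h) IH.
have Lf0 : L 0%N <= Lf.
  rewrite L0def; have [e|ne] := eqVneq xm1 (x 0%N).
    by move: L0pos; rewrite L0def /ell e eqxx ltxx.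
  exact: ell_le.
have ellLf a b : ell f grad a b <= Lf.
  have [e|ne] := eqVneq a b; last exact: ell_le.
  by rewrite /ell e eqxx; apply: le_trans Lf0; apply: ltW.
split.
  move=> t; split; first by rewrite hd norm2N; apply: diam_bound.
  by move=> g _ _; rewrite hd scalerN opprK; apply: lin_add_atom.
have Gall t : inG gmax gam t by rewrite /inG hgm ltry orbT.
split.
  have -> : (fun t => inG gmax gam t : Prop) = setT by apply/funext => t; apply/propext; split.
  exact: infinite_nat.
split.
  have Lpos t : 0 < L t.
    elim: t => [//|t IH]; rewrite LS lt_max; apply/orP; right.
    by rewrite mulr_gt0 //; case/andP: (rpos t).
  have LLf t : L t <= Lf.
    elim: t => [//|t IH]; rewrite LS ge_max ellLf /=.
    apply: le_trans IH; rewrite ler_piMl ?(ltW (Lpos t)) //; by case/andP: (rpos t).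
  pose P T := \prod_(i < T) rs i.
  pose m T := count (fun i => ~~ inI eta L i) (iota 0 T).
  have step s : rs s * eta ^+ (~~ inI eta L s) * L s <= L s.+1.
    have [rs0 rs1] := andP (rpos s).
    case: (boolP (inI eta L s)) => hI /=.
      by rewrite expr0 mulr1 LS le_max lexx orbT.
    rewrite expr1; move: hI; rewrite /inI -ltNge => hI.
    apply: le_trans _ (ltW hI); rewrite -mulrA ler_piMl //.
    by rewrite mulr_ge0 // ?(ltW (Lpos s)) // ltW // (lt_trans ltr01).
  have key T : P T * eta ^+ m T * L 0%N <= L T.
    elim: T => [|T IH].
      by rewrite /P /m big_ord0 /= expr0 !mul1r.
    rewrite /P big_ord_recr /= -/(P T) /m -addn1 iotaD count_cat /= addn0 -/(m T).
    rewrite exprD.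
    rewrite add0n addn1; apply: le_trans _ (step T).
    have e : P T * rs T * (eta ^+ m T * eta ^+ (~~ inI eta L T)) * L 0%N
      = rs T * eta ^+ (~~ inI eta L T) * (P T * eta ^+ m T * L 0%N) by ring.
    rewrite e ler_wpM2l //.
    have [rs0 _] := andP (rpos T); by rewrite mulr_ge0 ?exprn_ge0 ?ltW // (lt_trans ltr01).
  have Pge T : r <= P T.
    have homo : {homo P : a b / (a <= b)%N >-> b <= a}.
      move=> a b /subnK <-; elim: (b - a)%N => [|k IH]; first by rewrite add0n.
      rewrite addSn /P big_ord_recr /= -/(P (k + a)%N); apply: le_trans IH.
      have [rs0 rs1] := andP (rpos (k + a)%N).
      rewrite ler_piMr //; rewrite /P; apply: prodr_ge0 => i _.
      by case/andP: (rpos i) => /ltW.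
    have cv : cvgn P by apply/cvg_ex; exists r.
    have := nonincreasing_cvgn_ge homo cv T.
    by rewrite (cvg_lim _ rcv).
  move=> t.
  set M := m t.+1.
  have hM : r * eta ^+ M * L 0%N <= Lf.
    apply: le_trans (le_trans (key t.+1) (LLf t.+1)).
    have eta0 : 0 <= eta by apply: ltW; apply: lt_trans ltr01 eta1.
    by rewrite ler_wpM2r ?(ltW L0pos) // ler_wpM2r ?exprn_ge0.
  have eta0 : 0 < eta by apply: lt_trans ltr01 eta1.
  have rL0 : 0 < r * L 0%N by rewrite mulr_gt0.
  have hM' : eta ^+ M <= Lf / (r * L 0%N).
    by rewrite ler_pdivlMr // mulrCA mulrA.
  have Lfp : 0 < Lf / (r * L 0%N).
    by apply: lt_le_trans hM'; rewrite exprn_gt0.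
  have lnM : M%:R <= ln (Lf / (r * L 0%N)) / ln eta.
    rewrite ler_pdivlMr ?ln_gt0 // mulrC mulr_natr -lnXn //.
    by rewrite ler_ln // posrE ?exprn_gt0.
  have fl : (M%:Z <= Num.floor (ln (Lf / (r * L 0%N)) / ln eta))%R.
    by rewrite floor_ge_int.
  have cnt : count_GI gmax gam eta L t = (t.+1 - M)%N.
    have := count_predC (inI eta L) (iota 0 t.+1); rewrite size_iota => <-.
    rewrite /M /m -[count (fun i => ~~ _) _]/(count (predC (inI eta L)) _) addnK.
    by rewrite /count_GI; apply: eq_count => i; rewrite Gall.
  rewrite cnt natrB; last by have := count_size (fun i => ~~ inI eta L i) (iota 0 t.+1); rewrite size_iota.
  rewrite lerD2l lerN2.
  by rewrite -(ler_int R) in fl.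
move=> xstar linxs xsmin cf Rfin.
set RA := R_atom A f xstar (x 0%N).
have R1 : (1 <= RA)%E by rewrite /RA /R_atom le_max lexx.
have RAfin : RA \is a fin_num.
  rewrite fin_numE; apply/andP; split; last by rewrite lt_eqF.
  by apply/negP => /eqP e; move: R1; rewrite e.
have RAE : RA = (fine RA)%:E by rewrite fineK.
have F1 : 1 <= fine RA by rewrite -lee_fin -RAE.
split => // t.
set g := grad (x t). set M := dot g (d t).
have hM : forall a, A a -> dot g a <= M.
  move=> a Aa; have [[_ hv] _] := run t; have := hv (- a) ((sA a).1 Aa).
  rewrite /M hd !dotNr -/g => h; lra.
have M0 : 0 <= M.
  have := hM (v t) (vA t); rewrite /M hd dotNr => h; lra.
set E := f (x t) - f xstar.
have gi := @conv_grad _ _ _ _ Hg cf (x t) xstar.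
have bnd : forall c y, 0 < c -> @Defs.conv _ _ A y -> x t - xstar = c *: y -> E <= c * M.
  move=> c y c0 [k [w [a [w0 [w1 [aA ye]]]]]] e.
  have h1 : E <= dot g (x t - xstar).
    by rewrite /E; move: gi; rewrite -/g dotBr dotBr; lra.
  apply: le_trans h1 _; rewrite e dotZr ye dot_sumr; apply: ler_wpM2l; first exact: ltW.
  apply: (@le_trans _ _ (\sum_(i < k) w i * M)).
    by apply: ler_sum => i _; rewrite ler_wpM2l ?hM.
  by rewrite -mulr_suml w1 mul1r.
have an_le : (atomic_norm A (x t - xstar) <= RA)%E.
  rewrite /RA /R_atom le_max; apply/orP; right.
  by apply: ereal_sup_ubound; exists (x t); split => //; split => //.
have RApos : 0 < fine RA by apply: lt_le_trans ltr01 F1.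
have [Ele0|Egt0] := leP E 0.
  rewrite ler_pdivrMr //; apply: le_trans Ele0 _; exact: mulr_ge0 (ltW RApos).
have lb : forall z, (M = 0 \/ (0 < M /\ z * M <= E)) ->
    (z%:E <= atomic_norm A (x t - xstar))%E.
  move=> z hz; apply: le_ereal_inf_tmp => e [c [c0 [[y [cy ey]] ->]]].
  have := bnd c y c0 cy ey; case: hz => [M0'|[Mp hz]] h.
    by rewrite M0' mulr0 in h; have := lt_le_trans Egt0 h; rewrite ltxx.
  by rewrite lee_fin -(ler_pM2r Mp); apply: le_trans hz h.
have [M0'|Mp] := eqVneq M 0.
  have := le_trans (lb (fine RA + 1) (or_introl M0')) an_le.
  by rewrite RAE lee_fin; lra.
have Mp' : 0 < M by rewrite lt_neqAle eq_sym Mp M0.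
have hz : E / M * M <= E by rewrite divfK // gt_eqF.
have := le_trans (lb (E / M) (or_intror (conj Mp' hz))) an_le.
move=> h; rewrite RAE lee_fin ler_pdivrMr // in h.
by rewrite ler_pdivrMr // mulrC.
Qed.
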